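(* Let $S$ be a finite set of distinct lines in the plane, each having one of three distinct slopes, such that no point lies on three lines of $S$. Let $x\ge y\ge z$ be the numbers of lines of $S$ in the three slope classes. Consider the following greedy algorithm: while there exists a point at which two not-yet-hit lines of $S$ cross, choose such a point whose two lines belong to the two slope classes currently having the largest numbers of unhit lines, and mark these two lines as hit; afterwards, place one point on each remaining unhit line. This algorithm produces a minimum-cardinality hitting set for $S$, and the minimum number of points in a hitting set for $S$ is $$OPT_2(x,y,z)=\begin{cases} x & \text{if } x\ge y+z,\\ \lceil (x+y+z)/2\rceil & \text{if } x<y+z.\end{cases}$$
   Context: A hitting set for a set of lines is a finite set of points such that every line contains at least one of the points. *)

(* Defs.v *)
From HB Require Import structures.
From mathcomp Require Import all_boot all_order all_algebra.
Set Implicit Arguments. Unset Strict Implicit. Unset Printing Implicit Defensive.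
Import Order.TTheory GRing.Theory Num.Theory.

Section Lines.
Variable R : realFieldType.
Local Open Scope ring_scope.

Definition point := (R * R)%type.

(* A line is represented by a triple ((a, b), c) with (a, b) <> (0, 0);
   it is the set of points (u, v) with a*u + b*v = c. *)
Definition line := (R * R * R)%type.

Definition is_line (l : line) : bool := (l.1.1, l.1.2) != (0, 0).

Definition on_line (l : line) (p : point) : bool :=
  l.1.1 * p.1 + l.1.2 * p.2 == l.2.

(* l has slope (direction) d : the vector d is parallel to l. *)
Definition has_slope (d : R * R) (l : line) : bool :=
  l.1.1 * d.1 + l.1.2 * d.2 == 0.

Definition non_parallel (d e : R * R) : bool := d.1 * e.2 - d.2 * e.1 != 0.

Definition hitting (S : seq line) (H : seq point) : Prop :=
  forall l, l \in S -> exists2 p, p \in H & on_line l p.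

Definition dir3 (d0 d1 d2 : R * R) (i : 'I_3) : R * R := nth d0 [:: d0; d1; d2] i.

Definition ucount (dir : 'I_3 -> R * R) (U : seq line) (i : 'I_3) : nat :=
  count (has_slope (dir i)) U.

Definition top_two (dir : 'I_3 -> R * R) (U : seq line) (i j : 'I_3) : Prop :=
  i != j /\ forall k, k != i -> k != j ->
    (ucount dir U k <= ucount dir U i)%N /\ (ucount dir U k <= ucount dir U j)%N.

(* State of the greedy algorithm: (unhit lines, points chosen so far). *)
Definition greedy_step (dir : 'I_3 -> R * R)
    (st st' : seq line * seq point) : Prop :=
  exists (p : point) (l m : line) (i j : 'I_3),
    [/\ l \in st.1, m \in st.1, l != m, on_line l p & on_line m p] /\
    [/\ has_slope (dir i) l, has_slope (dir j) m, top_two dir st.1 i j &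
        st' = (rem m (rem l st.1), p :: st.2)].

Definition greedy_done (U : seq line) : Prop :=
  ~ exists (p : point) (l m : line),
      [/\ l \in U, m \in U, l != m, on_line l p & on_line m p].

Inductive greedy_reach (S : seq line) (dir : 'I_3 -> R * R) :
    seq line * seq point -> Prop :=
  | greedy_init : greedy_reach S dir (S, [::])
  | greedy_next st st' :
      greedy_reach S dir st -> greedy_step dir st st' -> greedy_reach S dir st'.

End Lines.

Definition OPT2 (x y z : nat) : nat :=
  if (y + z <= x)%N then x else ((x + y + z + 1) %/ 2)%N.

(* Main.v *)
Require Import Defs.
From HB Require Import structures.
From mathcomp Require Import all_boot all_order all_algebra.
From mathcomp Require Import ring lra zify.
Import Order.TTheory GRing.Theory Num.Theory.
Definition o0 : 'I_3 := @Ordinal 3 0 isT.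
Definition o1 : 'I_3 := @Ordinal 3 1 isT.
Definition o2 : 'I_3 := @Ordinal 3 2 isT.
Definition F (a b c : nat) := maxn (maxn a b) (maxn c ((a+b+c+1) %/ 2)).
Lemma enum3 (k : 'I_3) : k = o0 \/ k = o1 \/ k = o2.
Proof. case: k => [[|[|[|k]]] hk] //; [left|right;left|right;right]; exact: val_inj. Qed.

Lemma F_step (c c' : 'I_3 -> nat) (i j : 'I_3) : i != j ->
  (forall k, k != i -> k != j -> c k <= c i /\ c k <= c j) ->
  (forall k, c k = (i == k) + (j == k) + c' k) ->
  F (c o0) (c o1) (c o2) = (F (c' o0) (c' o1) (c' o2)).+1.
Proof.
move=> ij T E; have e0 := E o0; have e1 := E o1; have e2 := E o2; clear E.
case: (enum3 i) ij T e0 e1 e2 => [->|[->|->]];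
case: (enum3 j) => [->|[->|->]] //= _ T e0 e1 e2.
- have := T o2 isT isT; rewrite /F; lia.
- have := T o1 isT isT; rewrite /F; lia.
- have := T o2 isT isT; rewrite /F; lia.
- have := T o0 isT isT; rewrite /F; lia.
- have := T o1 isT isT; rewrite /F; lia.
- have := T o0 isT isT; rewrite /F; lia.
Qed.
Lemma F_opt x y z : y <= x -> z <= y -> F x y z = OPT2 x y z.
Proof. rewrite /F /OPT2; case: ifP; lia. Qed.

Set Implicit Arguments. Unset Strict Implicit. Unset Printing Implicit Defensive.

Section Geo.
Variable R : realFieldType.
Local Open Scope ring_scope.

Lemma np_sym (d e : R * R) : non_parallel d e = non_parallel e d.
Proof.
rewrite /non_parallel -oppr_eq0; congr (_ != _); ring.
Qed.

Lemma np_nz (d e : R * R) : non_parallel d e -> d != (0, 0).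
Proof.
case: d => a b; rewrite /non_parallel /=.
apply: contra => /eqP [-> ->]; rewrite !mul0r subrr.
by [].
Qed.

Lemma two_slopes (d e : R * R) (l : line R) :
  has_slope d l -> has_slope e l -> non_parallel d e -> ~~ is_line l.
Proof.
case: l => [[a b] c]; case: d => d1 d2; case: e => e1 e2.
rewrite /has_slope /non_parallel /is_line /= => /eqP h1 /eqP h2 hD.
have ha : a * (d1 * e2 - d2 * e1) = 0.
  have -> : a * (d1 * e2 - d2 * e1) = e2 * (a * d1 + b * d2) - d2 * (a * e1 + b * e2) by ring.
  by rewrite h1 h2 !mulr0 subrr.
have hb : b * (d1 * e2 - d2 * e1) = 0.
  have -> : b * (d1 * e2 - d2 * e1) = d1 * (a * e1 + b * e2) - e1 * (a * d1 + b * d2) by ring.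
  by rewrite h1 h2 !mulr0 subrr.
move: ha hb => /eqP; rewrite mulf_eq0 (negbTE hD) orbF => /eqP ->.
move/eqP; rewrite mulf_eq0 (negbTE hD) orbF => /eqP ->.
by rewrite negbK.
Qed.

Lemma cross_pt (d e : R * R) (l m : line R) :
  is_line l -> is_line m -> has_slope d l -> has_slope e m -> non_parallel d e ->
  exists p, on_line l p && on_line m p.
Proof.
move=> ll lm sl sm hde.
have hD : l.1.1 * m.1.2 - l.1.2 * m.1.1 != 0.
  apply/negP => /eqP hD.
  have : has_slope d m.
    move: ll sl; case: l hD => [[a b] c]; case: m lm sm => [[a' b'] c'] lm sm.
    case: d {hde} => d1 d2.
    rewrite /has_slope /is_line /= => hD ll /eqP h1.
    have ha : a * (a' * d1 + b' * d2) = 0.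
      have -> : a * (a' * d1 + b' * d2) = a' * (a * d1 + b * d2) + d2 * (a * b' - b * a') by ring.
      by rewrite h1 hD !mulr0 addr0.
    have hb : b * (a' * d1 + b' * d2) = 0.
      have -> : b * (a' * d1 + b' * d2) = b' * (a * d1 + b * d2) - d1 * (a * b' - b * a') by ring.
      by rewrite h1 hD !mulr0 subr0.
    move: ll; apply: contraLR => hn.
    move/eqP: ha; rewrite mulf_eq0 (negbTE hn) orbF => /eqP ->.
    move/eqP: hb; rewrite mulf_eq0 (negbTE hn) orbF => /eqP ->.
    by rewrite negbK.
  move=> sd; by move: (two_slopes sd sm hde); rewrite lm.
move: hD; case: l {ll sl} => [[a b] c]; case: m {lm sm} => [[a' b'] c'] /= hD.
exists ((c * b' - b * c') / (a * b' - b * a'), (a * c' - c * a') / (a * b' - b * a')).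
rewrite /on_line /=; apply/andP; split; apply/eqP; field; by [].
Qed.

Lemma scal_eq (k k' X X' : R) : k != 0 -> k' != 0 -> k * X' = k' * X ->
  (X' == 0) = (X == 0).
Proof.
move=> hk hk' h.
have : (k * X' == 0) = (k' * X == 0) by rewrite h.
by rewrite !mulf_eq0 (negbTE hk) (negbTE hk').
Qed.

Lemma par_same (d : R * R) (l m : line R) p :
  d != (0, 0) -> is_line l -> is_line m -> has_slope d l -> has_slope d m ->
  on_line l p -> on_line m p -> forall q, on_line l q = on_line m q.
Proof.
case: d => d1 d2; case: l => [[a b] c]; case: m => [[a' b'] c']; case: p => p1 p2.
rewrite /has_slope /is_line /on_line /= => hd hl hm /eqP h1 /eqP h2 /eqP e1 /eqP e2 [q1 q2] /=.
have hD : a * b' = b * a'.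
  apply/eqP; rewrite -subr_eq0; apply/eqP.
  have h3 : d1 * (a * b' - b * a') = 0.
    have -> : d1 * (a * b' - b * a') = b' * (a * d1 + b * d2) - b * (a' * d1 + b' * d2) by ring.
    by rewrite h1 h2 !mulr0 subrr.
  have h4 : d2 * (a * b' - b * a') = 0.
    have -> : d2 * (a * b' - b * a') = a * (a' * d1 + b' * d2) - a' * (a * d1 + b * d2) by ring.
    by rewrite h1 h2 !mulr0 subrr.
  move/eqP: h3; rewrite mulf_eq0 => /orP [/eqP z1|/eqP //].
  move/eqP: h4; rewrite mulf_eq0 => /orP [/eqP z2|/eqP //].
  by move: hd; rewrite z1 z2 eqxx.
rewrite -[LHS]subr_eq0 -[RHS]subr_eq0.
have [a0|a0] := eqVneq a 0.
  have b0 : b != 0 by move: hl; rewrite a0; apply: contra => /eqP ->.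
  have b0' : b' != 0.
    move: hm; apply: contra => /eqP b0'; apply/eqP; congr (_, _) => //.
    by move: hD; rewrite a0 b0' mul0r => /esym /eqP; rewrite mulf_eq0 (negbTE b0) => /eqP.
  have a0' : a' = 0.
    by move/eqP: hD; rewrite a0 mul0r eq_sym mulf_eq0 (negbTE b0) => /eqP.
  apply: (@scal_eq b' b) => //; rewrite -e1 -e2 a0 a0'; ring.
have a0' : a' != 0.
  move: hm; apply: contra => /eqP a0'; apply/eqP; congr (_, _) => //.
  by move: hD; rewrite a0' mulr0 => /eqP; rewrite mulf_eq0 (negbTE a0) => /eqP.
have eb : b' = b * a' / a by apply: (mulfI a0); rewrite hD; field.
apply: (@scal_eq a' a) => //; rewrite -e1 -e2 eb; by field.
Qed.

End Geo.

Definition pt (R : realFieldType) (l : line R) : point R :=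
  if l.1.1 != 0%R then (l.2 / l.1.1, 0)%R else (0, l.2 / l.1.2)%R.

Lemma pt_on (R : realFieldType) (l : line R) : is_line l -> on_line l (pt l).
Proof.
case: l => [[a b] c]; rewrite /pt /on_line /is_line /=.
have [a0|a0] := eqVneq a 0%R => /= hl.
  have b0 : b != 0%R by move: hl; rewrite a0; apply: contra => /eqP ->.
  by rewrite a0 mul0r add0r mulrC divfK.
by rewrite mulr0 addr0 mulrC divfK.
Qed.

Section Main.
Variable R : realFieldType.
Variables (S : seq (line R)) (d0 d1 d2 : R * R).
Hypotheses (np01 : non_parallel d0 d1) (np02 : non_parallel d0 d2) (np12 : non_parallel d1 d2).
Hypothesis Sline : all (@is_line R) S.
Hypothesis Suniq : uniq S.
Hypothesis Sext : forall l m, l \in S -> m \in S ->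
     (forall p, on_line l p = on_line m p) -> l = m.
Hypothesis Scl : all (fun l => [|| has_slope d0 l, has_slope d1 l | has_slope d2 l]) S.
Hypothesis S2 : forall p : point R, (count (fun l => on_line l p) S <= 2)%N.

Local Notation dir := (dir3 d0 d1 d2).

Lemma np_dir (i j : 'I_3) : i != j -> non_parallel (dir i) (dir j).
Proof.
case: (enum3 i) => [->|[->|->]]; case: (enum3 j) => [->|[->|->]] //= _;
  rewrite /dir3 /= // np_sym //.
Qed.

Lemma dir_nz (i : 'I_3) : dir i != (0, 0)%R.
Proof.
case: (enum3 i) => [->|[->|->]]; [exact: np_nz np01| exact: np_nz np12|].
have := np02; rewrite np_sym; exact: np_nz.
Qed.

Lemma class_ex l : l \in S -> exists i : 'I_3, has_slope (dir i) l.
Proof.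
move/(allP Scl) => /or3P [h|h|h]; [exists o0|exists o1|exists o2]; exact: h.
Qed.

Lemma class_uniq l i j : l \in S -> has_slope (dir i) l -> has_slope (dir j) l -> i = j.
Proof.
move=> lS hi hj; apply/eqP; apply: contraT => hij.
by move: (two_slopes hi hj (np_dir hij)); rewrite (allP Sline).
Qed.

Lemma cross l m i j : l \in S -> m \in S -> has_slope (dir i) l ->
  has_slope (dir j) m -> i != j -> exists p, on_line l p && on_line m p.
Proof.
move=> lS mS hl hm ij; apply: (cross_pt (allP Sline _ lS) (allP Sline _ mS) hl hm).
exact: np_dir.
Qed.

Lemma par l m i p : l \in S -> m \in S -> has_slope (dir i) l ->
  has_slope (dir i) m -> on_line l p -> on_line m p -> l = m.
Proof.
move=> lS mS hl hm pl pm; apply: Sext => //.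
exact: (par_same (dir_nz i) (allP Sline _ lS) (allP Sline _ mS) hl hm pl pm).
Qed.

Lemma class_eq l i k : l \in S -> has_slope (dir i) l -> has_slope (dir k) l = (i == k).
Proof.
move=> lS hi; apply/idP/eqP => [hk|<- //]; exact: class_uniq lS hi hk.
Qed.

Lemma part U : {subset U <= S} ->
  (ucount dir U o0 + ucount dir U o1 + ucount dir U o2 = size U)%N.
Proof.
rewrite /ucount; elim: U => [|l U IH] sub //=.
have lS : l \in S by apply: sub; rewrite inE eqxx.
have {}IH := IH (fun x hx => sub x (mem_behead (s := l :: U) hx)).
have [i hi] := class_ex lS.
rewrite !(class_eq _ lS hi).
case: (enum3 i) => [->|[->|->]] /=; rewrite -IH; lia.
Qed.

Definition Fc U := F (ucount dir U o0) (ucount dir U o1) (ucount dir U o2).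

Definition Inv (st : seq (line R) * seq (point R)) (h0 : nat) :=
  let: (U, H) := st in
  [/\ {subset U <= S} /\ uniq U,
      (forall l, l \in S -> l \notin U -> exists2 p, p \in H & on_line l p),
      (forall p l, p \in H -> l \in U -> ~~ on_line l p), uniq H &
      (size H + Fc U = h0)%N].


Lemma count_rem (a : pred (line R)) (l : line R) U : l \in U ->
  count a U = (a l + count a (rem l U))%N.
Proof. by move=> lU; rewrite (permP (perm_to_rem lU)). Qed.

Lemma inv_init : Inv (S, [::]) (Fc S).
Proof.
split; [by split| by move=> l -> | by [] | by [] | by rewrite add0n].
Qed.

Lemma inv_step st st' h0 : Inv st h0 -> greedy_step dir st st' -> Inv st' h0.
Proof.
case: st => U H; case: st' => U' H'.
move=> [[sub uU] hit nol uH sz] [p [l [m [i [j [[lU mU lm pl pm] [sl sm tt e]]]]]]].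
case: e => -> ->; rewrite /= in lU mU.
have lS := sub l lU; have mS := sub m mU.
have uU1 : uniq (rem l U) by apply: rem_uniq.
have mU1 : m \in rem l U by rewrite (mem_rem_uniq _ uU) inE eq_sym lm.
have memU x : (x \in rem m (rem l U)) = [&& x != m, x != l & x \in U].
  by rewrite (mem_rem_uniq _ uU1) inE (mem_rem_uniq _ uU) inE.
split.
- split; first by move=> x /mem_rem /mem_rem /sub.
  by apply: rem_uniq.
- move=> l0 l0S; rewrite memU; case l0U: (l0 \in U); last first.
    by move=> _; have [q qH ql] := hit l0 l0S (negbT l0U); exists q => //; rewrite inE qH orbT.
  rewrite andbT negb_and !negbK => /orP [/eqP ->|/eqP ->]; exists p => //; exact: mem_head.
- move=> q l0; rewrite inE memU => /orP [/eqP ->|qH] /and3P [l0m l0l l0U]; last exact: nol.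
  apply/negP => pl0.
  have : (3 <= count (fun l => on_line l p) S)%N.
    rewrite -size_filter; apply: (uniq_leq_size (s1 := [:: l; m; l0])).
      by rewrite /= !inE negb_or lm eq_sym l0l eq_sym l0m.
    move=> x; rewrite !inE mem_filter => /or3P [] /eqP ->;
      [by rewrite pl lS| by rewrite pm mS| by rewrite pl0 (sub _ l0U)].
  by move=> h3; have := leq_trans h3 (S2 p).
- rewrite /= uH andbT; apply/negP => pH; by move: (nol p l pH lU); rewrite pl.
- rewrite -sz /Fc.
  rewrite (@F_step (ucount dir U) (ucount dir (rem m (rem l U))) i j); first by rewrite addSnnS.
  + by case: tt.
  + by case: tt.
  + move=> k; rewrite /ucount (count_rem _ lU) (count_rem _ mU1).
    by rewrite (class_eq _ lS sl) (class_eq _ mS sm) addnA.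
Qed.


Lemma inv_reach st : greedy_reach S dir st -> Inv st (Fc S).
Proof.
elim => [|st1 st2 _ IH hs]; first exact: inv_init.
exact: inv_step hs.
Qed.

Lemma count_or (T : Type) (a b : pred T) s :
  (count (fun x => a x || b x) s <= count a s + count b s)%N.
Proof. elim: s => [|v s IH] //=; case: (a v); case: (b v) => /=; lia. Qed.

Lemma done_Fc U : {subset U <= S} -> greedy_done U -> Fc U = size U.
Proof.
move=> sub hd.
have pair i j : i != j -> ucount dir U i = 0%N \/ ucount dir U j = 0%N.
  move=> ij; case: (posnP (ucount dir U i)) => [->|pi]; [by left|right].
  apply/eqP; rewrite -leqn0 leqNgt; apply/negP => pj.
  move: pi pj; rewrite /ucount -has_count => pi; rewrite -has_count => pj.
  case/hasP: pi => l lU sl; case/hasP: pj => m mU sm.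
  have [p /andP[pl pm]] := cross (sub _ lU) (sub _ mU) sl sm ij.
  apply: hd; exists p, l, m; split => //.
  apply/eqP => lm; subst m.
  by move: ij; rewrite (class_uniq (sub _ lU) sl sm) eqxx.
rewrite -(part sub) /Fc /F.
have := pair o0 o1 isT; have := pair o0 o2 isT; have := pair o1 o2 isT; lia.
Qed.

Lemma part3 U H P :
  greedy_reach S dir (U, H) -> greedy_done U ->
  size P = size U ->
  (forall k, (k < size U)%N -> on_line (nth (0, 0, 0)%R U k) (nth (0, 0)%R P k)) ->
  hitting S (H ++ P) /\ size (undup (H ++ P)) = Fc S.
Proof.
move=> r hd sP hP.
have [[sub uU] hit nol uH sz] := inv_reach r.
split.
- move=> l lS; case lU: (l \in U).
    exists (nth (0, 0)%R P (index l U)).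
      by rewrite mem_cat; apply/orP; right; apply: mem_nth; rewrite sP index_mem.
    by have := hP (index l U); rewrite index_mem lU nth_index //; apply.
  have [q qH ql] := hit l lS (negbT lU); exists q => //; by rewrite mem_cat qH.
- have uHP : uniq (H ++ P).
    rewrite cat_uniq uH /=; apply/andP; split.
      apply/hasPn => q qP; apply/negP => qH.
      have kP : (index q P < size P)%N by rewrite index_mem.
      have := hP (index q P); rewrite -sP kP nth_index // => /(_ isT) ql.
      have := nol q _ qH (mem_nth (0, 0, 0)%R (leq_trans kP (eq_leq sP))).
      by rewrite ql.
    apply/(uniqP (0, 0)%R) => a b; rewrite !inE => ha hb e.
    apply/eqP; apply: contraT => ab; case: hd.
    rewrite sP in ha hb.
    exists (nth (0, 0)%R P a), (nth (0, 0, 0)%R U a), (nth (0, 0, 0)%R U b).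
    split; [exact: mem_nth|exact: mem_nth| |exact: hP|].
      by rewrite nth_uniq.
    by rewrite e; exact: hP.
  by rewrite undup_id // size_cat sP -(done_Fc sub hd).
Qed.

Lemma lb1 H : hitting S H -> (count (has_slope d0) S <= size (undup H))%N.
Proof.
move=> hH; set H' := undup H.
have hit' l : l \in S -> has (on_line l) H'.
  by move=> lS; have [p pH pl] := hH l lS; apply/hasP; exists p; rewrite ?mem_undup.
pose f l := nth (0, 0)%R H' (find (on_line l) H').
have fS l : l \in S -> f l \in H' /\ on_line l (f l).
  move=> lS; split; [apply: mem_nth; rewrite -has_find|apply: nth_find]; exact: hit'.
rewrite -size_filter -(size_map f); apply: uniq_leq_size.
  rewrite map_inj_in_uniq ?filter_uniq //.
  move=> l m; rewrite !mem_filter => /andP [sl lS] /andP [sm mS] e.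
  apply: (@par l m o0 (f l) lS mS sl sm (fS l lS).2); rewrite e; exact: (fS m mS).2.
move=> q /mapP [l]; rewrite mem_filter => /andP [_ lS] ->; exact: (fS l lS).1.
Qed.

Lemma lb2 H : hitting S H -> (size S <= 2 * size (undup H))%N.
Proof.
move=> hH; set H' := undup H.
have cov Hs : (count (fun l => has (on_line l) Hs) S <= 2 * size Hs)%N.
  elim: Hs => [|p Hs IH].
    by rewrite (@eq_count _ _ pred0) ?count_pred0.
  have := count_or (fun l => on_line l p) (fun l => has (on_line l) Hs) S.
  have := S2 p; rewrite /=; lia.
suff <- : count (fun l => has (on_line l) H') S = size S by apply: cov.
apply/eqP; rewrite -all_count; apply/allP => l lS.
by have [p pH pl] := hH l lS; apply/hasP; exists p; rewrite ?mem_undup.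
Qed.

Lemma choose_top (c : 'I_3 -> nat) :
  (forall i j, i != j -> c i = 0%N \/ c j = 0%N) \/
  exists i j, [/\ i != j, (forall k, k != i -> k != j -> c k <= c i /\ c k <= c j)%N,
                  (0 < c i)%N & (0 < c j)%N].
Proof.
case: (boolP [|| (c o0 == 0%N) && (c o1 == 0%N), (c o0 == 0%N) && (c o2 == 0%N)
              | (c o1 == 0%N) && (c o2 == 0%N)]) => h.
  left => i j; case: (enum3 i) => [->|[->|->]]; case: (enum3 j) => [->|[->|->]] //= _; lia.
right; case: (leqP (c o0) (c o1)) => h01; case: (leqP (c o0) (c o2)) => h02;
  case: (leqP (c o1) (c o2)) => h12;
  first [ (exists o1, o2; split; [by [] | by move=> k; case: (enum3 k) => [->|[->|->]] //= _ _; lia | lia | lia]) | (exists o0, o1; split; [by [] | by move=> k; case: (enum3 k) => [->|[->|->]] //= _ _; lia | lia | lia]) | (exists o0, o2; split; [by [] | by move=> k; case: (enum3 k) => [->|[->|->]] //= _ _; lia | lia | lia]) ].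
Qed.

Lemma done_of U : {subset U <= S} ->
  (forall i j, i != j -> ucount dir U i = 0%N \/ ucount dir U j = 0%N) -> greedy_done U.
Proof.
move=> sub h [p [l [m [lU mU lm pl pm]]]].
have [i si] := class_ex (sub _ lU); have [j sj] := class_ex (sub _ mU).
have [ij|ij] := eqVneq i j.
  subst j; by move: lm; rewrite (par (sub _ lU) (sub _ mU) si sj pl pm) eqxx.
have ci : (0 < ucount dir U i)%N by rewrite /ucount -has_count; apply/hasP; exists l.
have cj : (0 < ucount dir U j)%N by rewrite /ucount -has_count; apply/hasP; exists m.
by case: (h i j ij) => e; [move: ci|move: cj]; rewrite e.
Qed.

Lemma reach_done n U H : (size U <= n)%N -> greedy_reach S dir (U, H) ->
  exists U' H', greedy_reach S dir (U', H') /\ greedy_done U'.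
Proof.
elim: n U H => [|n IH] U H hs r; have [[sub uU] _ _ _ _] := inv_reach r.
all: case: (choose_top (ucount dir U)) => [h|[i [j [ij tt ci cj]]]].
- exists U, H; split; [exact: r | exact: done_of].
- by have := leq_trans (leq_trans ci (count_size _ U)) hs.
- exists U, H; split; [exact: r | exact: done_of].
move: ci cj; rewrite /ucount -has_count => /hasP [l lU sl].
rewrite -has_count => /hasP [m mU sm].
have [p /andP [pl pm]] := cross (sub _ lU) (sub _ mU) sl sm ij.
have lm : l != m.
  by apply/eqP => e; subst m; move: ij; rewrite (class_uniq (sub _ lU) sl sm) eqxx.
have uU1 : uniq (rem l U) by apply: rem_uniq.
have mU1 : m \in rem l U by rewrite (mem_rem_uniq _ uU) inE eq_sym lm.
apply: (IH (rem m (rem l U)) (p :: H)).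
  rewrite size_rem // size_rem //; case: (size U) hs => [|k] //= hs.
  rewrite ltnS in hs; exact: leq_trans (leq_pred _) hs.
apply: (greedy_next r); exists p, l, m, i, j; split; first by split.
by split.
Qed.




Lemma main_sec :
  let x := count (has_slope d0) S in
  let y := count (has_slope d1) S in
  let z := count (has_slope d2) S in
  (y <= x)%N -> (z <= y)%N ->
  (forall H : seq (point R), hitting S H -> (OPT2 x y z <= size (undup H))%N) /\
  (exists H : seq (point R), hitting S H /\ size (undup H) = OPT2 x y z) /\
  (forall (U : seq (line R)) (H P : seq (point R)),
     greedy_reach S (dir3 d0 d1 d2) (U, H) -> greedy_done U ->
     size P = size U ->
     (forall k, (k < size U)%N -> on_line (nth (0, 0, 0)%R U k) (nth (0, 0)%R P k)) ->
     hitting S (H ++ P) /\ size (undup (H ++ P)) = OPT2 x y z).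
Proof.
move=> x y z yx zy.
have FS : Fc S = OPT2 x y z by exact: F_opt.
have hp : (x + y + z = size S)%N by exact: (part (fun _ h => h)).
split; [|split].
- move=> H hH; have h1 : (x <= size (undup H))%N by exact: lb1 hH.
  have h2 := lb2 hH; rewrite /OPT2; case: ifP => _; [exact: h1 | lia].
- have [U [H [r d]]] := reach_done (leqnn (size S)) (greedy_init S dir).
  have [[sub _] _ _ _ _] := inv_reach r.
  exists (H ++ map (@pt R) U).
  have hP : forall k, (k < size U)%N ->
      on_line (nth (0, 0, 0)%R U k) (nth (0, 0)%R (map (@pt R) U) k).
    move=> k hk; rewrite (nth_map (0, 0, 0)%R) //; apply: pt_on.
    by apply: (allP Sline); apply: sub; exact: mem_nth.
  have [hh hs] := part3 r d (size_map _ _) hP.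
  split; [exact: hh | rewrite hs; exact: FS].
- move=> U H P r d sP hP; rewrite -FS; exact: (part3 r d sP hP).
Qed.

End Main.

Unset Implicit Arguments.

Theorem mainTheorem3 (R : realFieldType) (S : seq (line R)) (d0 d1 d2 : R * R) :
  non_parallel d0 d1 -> non_parallel d0 d2 -> non_parallel d1 d2 ->
  all (@is_line R) S ->
  uniq S ->
  (forall l m, l \in S -> m \in S ->
     (forall p, on_line l p = on_line m p) -> l = m) ->
  all (fun l => [|| has_slope d0 l, has_slope d1 l | has_slope d2 l]) S ->
  (forall p : point R, (count (fun l => on_line l p) S <= 2)%N) ->
  let x := count (has_slope d0) S in
  let y := count (has_slope d1) S in
  let z := count (has_slope d2) S in
  (y <= x)%N -> (z <= y)%N ->
  (forall H : seq (point R), hitting S H -> (OPT2 x y z <= size (undup H))%N) /\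
  (exists H : seq (point R), hitting S H /\ size (undup H) = OPT2 x y z) /\
  (forall (U : seq (line R)) (H P : seq (point R)),
     greedy_reach S (dir3 d0 d1 d2) (U, H) -> greedy_done U ->
     size P = size U ->
     (forall k, (k < size U)%N -> on_line (nth (0, 0, 0)%R U k) (nth (0, 0)%R P k)) ->
     hitting S (H ++ P) /\ size (undup (H ++ P)) = OPT2 x y z).
Proof.
move=> h1 h2 h3 h4 h5 h6 h7 h8.
exact: (main_sec h1 h2 h3 h4 h5 h6 h7 h8).
Qed.
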